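(* There is a constant $c>0$ such that for every sufficiently large $n$ there exists an input $x\in\mathrm{Hex}_n^{-1}( * )$ with $\mathrm{C}_{\bar 0}(\mathrm{Hex}_n,x)\ge c\,n^{1.5}$ and $\mathrm{C}_{\bar 1}(\mathrm{Hex}_n,x)\ge c\,n^{1.5}$.
   Context: Inputs to $\mathrm{Hex}_n\colon\{0,1\}^{n\times n}\to\{0,1,*\}$ are $n\times n$ boolean matrices. Two entries of $[n]\times[n]$ are connected if they are horizontally or vertically adjacent (not diagonally). A $1$-path in $x$ is a sequence of $1$-entries, consecutive ones connected, starting in the topmost row and ending in the bottommost row; a $0$-path is a sequence of $0$-entries, consecutive ones connected, starting in the leftmost column and ending in the rightmost column; the length of a path is its number of entries. $\mathrm{Hex}_n(x)=1$ if $x$ contains a $1$-path of length at most $2n$; $\mathrm{Hex}_n(x)=0$ if $x$ contains a $0$-path of length at most $2n$; $\mathrm{Hex}_n(x)=*$ otherwise. For a partial function $f$: a partial input $\rho$ is consistent with $x$ if it agrees with $x$ on its non-$*$ entries; its size is the number of non-$*$ entries; for $\Sigma\subseteq\{0,1,*\}$, $\rho$ is a $\Sigma$-certificate for $x$ if it is consistent with $x$ and $f(x')\in\Sigma$ for every $x'$ consistent with $\rho$; $\mathrm{C}_\Sigma(f,x)$ is the least size of a $\Sigma$-certificate for $x$; $\bar0=\{1,*\}$ and $\bar1=\{0,*\}$. *)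

(* Defs.v *)
From HB Require Import structures.
From mathcomp Require Import all_boot all_order all_algebra.
From mathcomp Require Import boolp reals exp.
Set Implicit Arguments. Unset Strict Implicit. Unset Printing Implicit Defensive.

(* Inputs: n x n boolean matrices; cells are pairs (row, column). *)
Definition cell (n : nat) := ('I_n * 'I_n)%type.

Definition adj (n : nat) (p q : cell n) : bool :=
  ((p.1 == q.1) && (((p.2 : nat).+1 == q.2) || ((q.2 : nat).+1 == p.2))) ||
  ((p.2 == q.2) && (((p.1 : nat).+1 == q.1) || ((q.1 : nat).+1 == p.1))).

Definition bseq (n : nat) (x : 'M[bool]_n) (b : bool) (s : seq (cell n)) : bool :=
  if s is c :: s' then path (@adj n) c s' && all (fun p => x p.1 p.2 == b) s
  else false.

Definition one_path (n : nat) (x : 'M[bool]_n) (s : seq (cell n)) : bool :=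
  if s is c :: s' then
    [&& bseq x true s, (c.1 : nat) == 0 & ((last c s').1 : nat) == n.-1]
  else false.

Definition zero_path (n : nat) (x : 'M[bool]_n) (s : seq (cell n)) : bool :=
  if s is c :: s' then
    [&& bseq x false s, (c.2 : nat) == 0 & ((last c s').2 : nat) == n.-1]
  else false.

Definition has_short_1path (n : nat) (x : 'M[bool]_n) : Prop :=
  exists s, one_path x s /\ size s <= 2 * n.
Definition has_short_0path (n : nat) (x : 'M[bool]_n) : Prop :=
  exists s, zero_path x s /\ size s <= 2 * n.

(* Output values {0,1,*} encoded as option bool:
   Some true = 1, Some false = 0, None = *. *)
Definition Hex (n : nat) (x : 'M[bool]_n) : option bool :=
  if `[< has_short_1path x >] then Some true
  else if `[< has_short_0path x >] then Some false
  else None.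

Definition bar0 : pred (option bool) := fun v => v != Some false.
Definition bar1 : pred (option bool) := fun v => v != Some true.

(* Partial inputs: entries in {0,1,*}, with None = *. *)
Definition consistent (n : nat) (rho : 'M[option bool]_n) (x : 'M[bool]_n) : bool :=
  [forall i, forall j, (rho i j == None) || (rho i j == Some (x i j))].

Definition psize (n : nat) (rho : 'M[option bool]_n) : nat :=
  #|[pred p : cell n | rho p.1 p.2 != None]|.

Definition is_cert (n : nat) (f : 'M[bool]_n -> option bool) (Sigma : pred (option bool))
    (x : 'M[bool]_n) (rho : 'M[option bool]_n) : Prop :=
  consistent rho x /\ forall x' : 'M[bool]_n, consistent rho x' -> Sigma (f x').

(* C_Sigma(f, x): least size of a Sigma-certificate for x (default n*n,
   the maximum possible size, if none exists). *)
Definition Ccert (n : nat) (f : 'M[bool]_n -> option bool) (Sigma : pred (option bool))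
    (x : 'M[bool]_n) : nat :=
  \big[minn/(n * n)]_(rho : 'M[option bool]_n | `[< is_cert f Sigma x rho >]) psize rho.

(* Main.v *)
Require Import Defs.
From HB Require Import structures.
From mathcomp Require Import all_boot all_order all_algebra.
From mathcomp Require Import boolp reals exp.
From mathcomp Require Import zify ring lra.
From Stdlib Require Import PeanoNat.
Set Implicit Arguments. Unset Strict Implicit. Unset Printing Implicit Defensive.

Lemma lip_path n (M : 'M[bool]_n) b (f : cell n -> nat) c s :
  (forall p q, adj p q -> M p.1 p.2 = b -> M q.1 q.2 = b -> f q <= (f p).+1) ->
  path (@adj n) c s -> all (fun p => M p.1 p.2 == b) (c :: s) ->
  f (last c s) <= f c + size s.
Proof.
move=> Hf; elim: s c => [|d s IH] c /=; first by rewrite addn0.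
move=> /andP[Hcd Hp] /and3P[/eqP Hc /eqP Hd Ha].
have := IH d Hp; rewrite /= Hd eqxx Ha => /(_ isT) Hl.
have := Hf _ _ Hcd Hc Hd. lia.
Qed.

Lemma inv_path n (M : 'M[bool]_n) b (I : pred (cell n)) c s :
  (forall p q, adj p q -> M p.1 p.2 = b -> M q.1 q.2 = b -> I p -> I q) ->
  path (@adj n) c s -> all (fun p => M p.1 p.2 == b) (c :: s) ->
  I c -> I (last c s).
Proof.
move=> Hf; elim: s c => [|d s IH] c //=.
move=> /andP[Hcd Hp] /and3P[/eqP Hc /eqP Hd Ha] Ic.
apply: IH => //=; first by rewrite Hd eqxx.
exact: Hf Hcd Hc Hd Ic.
Qed.

Definition cellN m (i j : nat) : cell m.+1 := (inord i, inord j).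
Definition dist (a b : nat) := (a - b) + (b - a).
Definition rng (a b : nat) : seq nat :=
  if a <= b then iota a (b - a).+1 else rev (iota b (a - b).+1).
Definition seg m i a b := [seq cellN m i j | j <- rng a b].
Fixpoint bld m (q : nat -> nat) (k r : nat) : seq (cell m.+1) :=
  if r is r'.+1 then seg m k (q k) (q k.+1) ++ bld m q k.+1 r'
  else [:: cellN m k (q k)].

Definition nrel (x y : nat) := (x.+1 == y) || (y.+1 == x).

Lemma iota_nrel a k : path nrel a (iota a.+1 k).
Proof. elim: k a => [|k IH] a //=. by rewrite /nrel eqxx IH. Qed.

Lemma last_iota a k : last a (iota a.+1 k) = a + k.
Proof. elim: k a => [|k IH] a /=; first by rewrite addn0. by rewrite IH addSnnS. Qed.

Lemma rng_spec a b : exists s, [/\ rng a b = a :: s, last a s = b,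
  path nrel a s, size s = dist a b &
  forall j, j \in a :: s -> minn a b <= j <= maxn a b].
Proof.
rewrite /rng /dist; case: leqP => Hab.
- exists (iota a.+1 (b - a)); split => //.
  + rewrite last_iota; lia.
  + exact: iota_nrel.
  + rewrite size_iota; lia.
  + move=> j; rewrite (_ : a :: iota a.+1 (b - a) = iota a (b - a).+1) // mem_iota => /andP[H1 H2]. lia.
- have Hl : last b (iota b.+1 (a - b)) = a by rewrite last_iota; lia.
  have Hne : rev (iota b.+1 (a - b)) = a :: behead (rev (iota b.+1 (a - b))).
    case/lastP E2 : (iota b.+1 (a - b)) => [|t x].
      by move: (congr1 size E2); rewrite size_iota /=; lia.
    rewrite rev_rcons /=. by move: Hl; rewrite E2 last_rcons => ->.
  exists (behead (rev (iota b.+1 (a - b))) ++ [:: b]).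
  have Hr : rev (iota b (a - b).+1) = a :: (behead (rev (iota b.+1 (a - b))) ++ [:: b]).
    by rewrite /= rev_cons -cats1 Hne.
  rewrite Hr.
  have Hp : path nrel a (behead (rev (iota b.+1 (a - b))) ++ [:: b]).
    have : sorted nrel (rev (iota b (a - b).+1)).
      rewrite rev_sorted /=.
      apply: sub_path (iota_nrel b (a - b)) => x y; rewrite /nrel orbC //.
    by rewrite Hr.
  split => //.
  + by rewrite last_cat.
  + rewrite size_cat size_behead size_rev size_iota /=; lia.
  + move=> j; rewrite -Hr mem_rev mem_iota => /andP[H1 H2]. lia.
Qed.

Lemma adjH m i j j' : j <= m -> j' <= m -> nrel j j' -> adj (cellN m i j) (cellN m i j').
Proof.
move=> Hj Hj' Hn; rewrite /adj /cellN /=; apply/orP; left; rewrite eqxx /= !inordK //; exact: Hn.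
Qed.

Lemma adjV m i j : i < m -> j <= m -> adj (cellN m i j) (cellN m i.+1 j).
Proof.
move=> Hi Hj; rewrite /adj /cellN /= eqxx /= !inordK //; last by lia.
by rewrite eqxx orbT.
Qed.

Lemma seg_spec m i a b : a <= m -> b <= m -> exists s,
  [/\ seg m i a b = cellN m i a :: s, last (cellN m i a) s = cellN m i b,
  path (@adj m.+1) (cellN m i a) s, size s = dist a b &
  forall p, p \in seg m i a b -> exists j, p = cellN m i j /\ minn a b <= j <= maxn a b].
Proof.
move=> Ha Hb; have [s [E1 E2 E3 E4 E5]] := rng_spec a b.
exists [seq cellN m i j | j <- s]; split.
- by rewrite /seg E1.
- by rewrite last_map E2.
- have Hall : all (fun j => j <= m) (a :: s).
    apply/allP => j /E5; lia.
  move: Hall E3; elim: s (a) {E1 E2 E4 E5 Ha} => [|y s IH] x //=.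
  move=> /and3P[Hx Hy Hs] /andP[Hxy Hp]. rewrite adjH //=. apply: IH => //=. by rewrite Hy.
- by rewrite size_map.
- move=> p; rewrite /seg E1 => /mapP[j Hj ->]; exists j; split => //; exact: E5.
Qed.

Lemma bld_spec m q k r : k + r <= m -> (forall i, i <= m -> q i <= m) -> exists s,
  [/\ bld m q k r = cellN m k (q k) :: s,
      last (cellN m k (q k)) s = cellN m (k + r) (q (k + r)),
      path (@adj m.+1) (cellN m k (q k)) s,
      size s = r + \sum_(t < r) dist (q (k + t)) (q (k + t).+1) &
      forall p, p \in bld m q k r -> exists i j, p = cellN m i j /\
        ((k <= i < k + r /\ minn (q i) (q i.+1) <= j <= maxn (q i) (q i.+1))
         \/ (i = k + r /\ j = q (k + r)))].
Proof.
move=> Hkr Hq; elim: r k Hkr => [|r IH] k Hkr.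
- exists [::]; rewrite addn0 big_ord0; split => //.
  move=> p; rewrite inE => /eqP ->; exists k, (q k); split => //; right; split; lia.
- have [s1 [F1 F2 F3 F4 F5]] := seg_spec k (Hq k ltac:(lia)) (Hq k.+1 ltac:(lia)).
  have [s2 [G1 G2 G3 G4 G5]] := IH k.+1 ltac:(lia).
  exists (s1 ++ bld m q k.+1 r); split.
  + by rewrite /= F1.
  + rewrite last_cat F2 G1 /= G2 addSnnS //.
  + rewrite cat_path F3 /= F2 G1 /= G3 andbT. apply: adjV; [lia | apply: Hq; lia].
  + rewrite size_cat F4 G1 /= G4 big_ord_recl /= addn0.
    have -> : \sum_(i < r) dist (q (k + bump 0 i)) (q (k + bump 0 i).+1) =
              \sum_(t < r) dist (q (k.+1 + t)) (q (k.+1 + t).+1).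
      by apply: eq_bigr => i _; rewrite /bump /= add1n addSnnS.
    rewrite /dist; set S := \sum_(t < r) _; lia.
  + move=> p; rewrite /= mem_cat => /orP[Hp|Hp].
    * have [j [-> Hj]] := F5 p Hp; exists k, j; split => //; left; split => //; lia.
    * have [i [j [-> [[H1 H2]|[H1 H2]]]]] := G5 p Hp; exists i, j; split => //.
      - left; split => //; lia.
      - right; rewrite H1 H2 addSnnS //.
Qed.

Lemma GC m (P : pred (cell m.+1)) (q : nat -> nat) :
  (forall i, i <= m -> q i <= m) ->
  (forall i j, i < m -> minn (q i) (q i.+1) <= j <= maxn (q i) (q i.+1) -> P (cellN m i j)) ->
  P (cellN m m (q m)) ->
  exists c s, [/\ path (@adj m.+1) c s, all P (c :: s), (c.1 : nat) = 0,
     ((last c s).1 : nat) = m & size (c :: s) = m.+1 + \sum_(t < m) dist (q t) (q t.+1)].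
Proof.
move=> Hq HP Hm; have [s [E1 E2 E3 E4 E5]] := @bld_spec m q 0 m (leqnn _) Hq.
exists (cellN m 0 (q 0)), s; split => //.
- apply/allP => p; rewrite -E1 => /E5 [i [j [-> [[H1 H2]|[H1 H2]]]]].
  + exact: HP.
  + by rewrite H1 H2 add0n.
- by rewrite /cellN /= inordK.
- by rewrite E2 /cellN /= inordK add0n.
- by rewrite /= E4.
Qed.

Definition barrier (n i : nat) : bool := odd i && (i.+2 <= n).
Definition off (h i : nat) : nat := if i %% 4 == 1 then 0 else h.
Definition leak (n h i j : nat) : bool :=
  [&& barrier n i, j %% h.*2 == off h i, h <= j & j + h < n].
Definition X (n h i j : nat) : bool := ~~ barrier n i || leak n h i j.

Lemma off_cases h i : off h i = 0 \/ off h i = h.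
Proof. rewrite /off; case: ifP; auto. Qed.

Lemma off_diff h i : 0 < h -> odd i -> off h i.+2 <> off h i.
Proof.
move=> Hh Hi; have H2 : i %% 2 = 1 by rewrite modn2 Hi.
rewrite /off; case: ifP => /eqP H3; case: ifP => /eqP H4; lia.
Qed.

Lemma res_far h a b u v : 0 < h -> a %% h.*2 = u -> b %% h.*2 = v ->
  (u = 0 \/ u = h) -> (v = 0 \/ v = h) -> u <> v -> h <= dist a b.
Proof.
move=> Hh Ha Hb Hu Hv Huv.
have Ea := divn_eq a h.*2; have Eb := divn_eq b h.*2.
rewrite Ha in Ea; rewrite Hb in Eb.
set A := a %/ h.*2 in Ea; set B := b %/ h.*2 in Eb.
rewrite /dist.
case: (ltngtP A B) => HAB.
- have : A.+1 * h.*2 <= B * h.*2 by rewrite leq_mul2r HAB orbT.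
  rewrite mulSn.
  lia.
- have : B.+1 * h.*2 <= A * h.*2 by rewrite leq_mul2r HAB orbT.
  rewrite mulSn.
  lia.
- rewrite HAB in Ea; lia.
Qed.

Lemma res_same M a b : 0 < M -> a %% M = b %% M -> a < b -> M <= b - a.
Proof.
move=> HM Hab Hlt.
have Ea := divn_eq a M; have Eb := divn_eq b M.
set A := a %/ M in Ea; set B := b %/ M in Eb.
case: (ltngtP A B) => HAB.
- have : A.+1 * M <= B * M by rewrite leq_mul2r HAB orbT.
  rewrite mulSn.
  lia.
- have : B.+1 * M <= A * M by rewrite leq_mul2r HAB orbT.
  rewrite mulSn.
  lia.
- rewrite HAB in Ea; lia.
Qed.

Lemma leak_near n h i c : 0 < h -> 6 * h <= n -> barrier n i -> c < n ->
  exists l, leak n h i l /\ dist c l <= 5 * h.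
Proof.
move=> Hh Hn Hb Hc.
pose a := minn c (n - 5 * h).
have Ha : a = minn c (n - 5 * h) by [].
clearbody a.
pose A := a %/ h.*2.
have Ea : a = A * h.*2 + a %% h.*2 := divn_eq _ _.
have Hr : a %% h.*2 < h.*2 by rewrite ltn_pmod // double_gt0.
have Ho := off_cases h i.
exists (A.+1 * h.*2 + off h i); split.
- rewrite /leak Hb /= modnMDl modn_small; last by case: Ho => ->; lia.
  rewrite eqxx /=; move: Ea; rewrite mulSn; move: (A * h.*2) => Q Ea.
  case: Ho => ->; apply/andP; split; lia.
- move: Ea; rewrite /dist mulSn; move: (A * h.*2) => Q Ea.
  case: Ho => ->; lia.
Qed.

Definition delta h b j := let r := (j + (h.*2 - off h b)) %% h.*2 in minn r (h.*2 - r).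

Lemma delta_le h b j : 0 < h -> delta h b j <= h.
Proof. move=> Hh; rewrite /delta; lia. Qed.

Lemma delta_lip h b j : 0 < h -> delta h b j.+1 <= (delta h b j).+1 /\ delta h b j <= (delta h b j.+1).+1.
Proof.
move=> Hh; rewrite /delta addSn modnS.
have Hr : (j + (h.*2 - off h b)) %% h.*2 < h.*2 by rewrite ltn_pmod // double_gt0.
case: ifP => Hd.
- have : h.*2 %| ((j + (h.*2 - off h b)) %% h.*2).+1.
    by move: Hd; rewrite {1}(divn_eq (j + (h.*2 - off h b)) h.*2) -addnS dvdn_addr ?dvdn_mull.
  move/dvdn_leq => /(_ isT) H.
  have E : (j + (h.*2 - off h b)) %% h.*2 = h.*2.-1 by lia.
  rewrite E; lia.
- lia.
Qed.

Lemma delta0 h b j : 0 < h -> j %% h.*2 = off h b -> delta h b j = 0.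
Proof.
move=> Hh Hj; rewrite /delta -modnDml Hj.
have Ho := off_cases h b.
have -> : off h b + (h.*2 - off h b) = h.*2 by case: Ho => ->; lia.
rewrite modnn /=; lia.
Qed.

Lemma deltah h b j : 0 < h -> odd b -> j %% h.*2 = off h b.+2 -> delta h b j = h.
Proof.
move=> Hh Hb Hj; have Hd := off_diff Hh Hb.
rewrite /delta -modnDml Hj.
case: (off_cases h b) => Hob; rewrite Hob in Hd *;
  case: (off_cases h b.+2) => Hob2; rewrite Hob2 in Hd *; try lia.
- by rewrite subn0 modnDr modn_small; lia.
- rewrite (_ : 0 + (h.*2 - h) = h); last lia. by rewrite modn_small; lia.
Qed.

Definition bb (i : nat) := if odd i then i - 2 else i - 1.
Definition Phi n h i j : nat :=
  if barrier n i then i./2 * h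
  else if i == 0 then 0 else (bb i)./2 * h + delta h (bb i) j.

Lemma half_fact i : odd i + (i./2).*2 = i.
Proof. exact: odd_double_half. Qed.

Lemma leak_res n h i j : leak n h i j -> j %% h.*2 = off h i.
Proof. by case/and4P => _ /eqP. Qed.

Lemma Phi_down n h i j : 0 < h -> 4 <= n -> i.+1 < n ->
  X n h i j -> X n h i.+1 j -> Phi n h i.+1 j <= Phi n h i j.
Proof.
move=> Hh Hn Hi; rewrite /X /Phi /bb.
have F1 := half_fact i; have F2 := half_fact i.+1; have F3 := half_fact (i - 1).
case Bi: (barrier n i); case Bi1: (barrier n i.+1) => /=.
- move: Bi Bi1; rewrite /barrier /=; lia.
- move=> Hl _. move: Bi; rewrite /barrier => /andP[Ho _]. rewrite Ho /=.
  rewrite subn1 /= delta0 //; last exact: leak_res Hl. lia.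
- move=> _ Hl; have Hr := leak_res Hl.
  case: (i =P 0) => Hi0 /=; first by subst i.
  move: Bi1; rewrite /barrier /= => /andP[Ho _].
  rewrite (negbTE Ho).
  have Hb : odd (i - 1) by lia.
  rewrite deltah //; last by rewrite (_ : (i - 1).+2 = i.+1) //; lia.
  have Hodd : odd i.+1 by [].
  move: F1 F2 F3; rewrite /= Ho /=. lia.
- move=> _ _.
  case: (i =P 0) => Hi0 /=.
  + subst i; move: Bi1; rewrite /barrier /=; lia.
  + move: Bi Bi1; rewrite /barrier /=.
    case Ho: (odd i) => /=.
    * lia.
    * move=> _ H. have -> : i.+1 - 2 = i - 1 by lia. lia.
Qed.

Lemma Phi_up n h i j : 0 < h -> 4 <= n -> i.+1 < n ->
  X n h i j -> X n h i.+1 j -> Phi n h i j <= (Phi n h i.+1 j).+2.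
Proof.
move=> Hh Hn Hi; rewrite /X /Phi /bb.
have F1 := half_fact i; have F2 := half_fact i.+1; have F3 := half_fact (i - 1).
case Bi: (barrier n i); case Bi1: (barrier n i.+1) => /=.
- move: Bi Bi1; rewrite /barrier /=; lia.
- move=> Hl _. move: Bi; rewrite /barrier => /andP[Ho _]. rewrite Ho /=. rewrite subn1 /=; lia.
- move=> _ Hl.
  case: (i =P 0) => Hi0 /=; first by lia.
  move: Bi1; rewrite /barrier /= => /andP[Ho _].
  rewrite (negbTE Ho).
  have := delta_le (i - 1) j Hh.
  move: F1 F2 F3; rewrite /= Ho /=. lia.
- move=> _ _.
  case: (i =P 0) => Hi0 /=.
  + subst i; move: Bi1; rewrite /barrier /=; lia.
  + move: Bi Bi1; rewrite /barrier /=.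
    case Ho: (odd i) => /=.
    * lia.
    * move=> _ H. have -> : i.+1 - 2 = i - 1 by lia. lia.
Qed.

Lemma Phi_hor n h i j : 0 < h ->
  X n h i j -> X n h i j.+1 -> Phi n h i j.+1 <= (Phi n h i j).+1 /\ Phi n h i j <= (Phi n h i j.+1).+1.
Proof.
move=> Hh; rewrite /X /Phi.
case Bi: (barrier n i) => /=.
- move=> /leak_res H1 /leak_res H2.
  have : j %% h.*2 = j.+1 %% h.*2 by rewrite H1 H2.
  move=> E; have := @res_same h.*2 _ _ (ltac:(by rewrite double_gt0)) E (ltnSn j); rewrite (_ : j.+1 - j = 1); last lia.
  lia.
- move=> _ _; case: (i == 0) => /=; first lia.
  have := delta_lip (bb i) j Hh; lia.
Qed.

Definition xm n h : 'M[bool]_n := \matrix_(i, j) X n h i j.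

Lemma Psi_lip n h (M : 'M[bool]_n) : 0 < h -> 4 <= n ->
  (forall i j, M i j -> X n h i j) ->
  forall p q : cell n, adj p q -> M p.1 p.2 = true -> M q.1 q.2 = true ->
  (q.1 : nat) + Phi n h q.1 q.2 <= ((p.1 : nat) + Phi n h p.1 p.2).+1.
Proof.
move=> Hh Hn HM [pi pj] [qi qj] /=.
rewrite /adj /= => /orP[/andP[/eqP Ei /orP[/eqP Ej|/eqP Ej]]|/andP[/eqP Ej /orP[/eqP Ei|/eqP Ei]]] Hp Hq.
- subst qi; have Xp := HM _ _ Hp; have Xq := HM _ _ Hq; rewrite -Ej in Xq *.
  have [H1 _] := Phi_hor Hh Xp Xq; lia.
- subst qi; have Xp := HM _ _ Hp; have Xq := HM _ _ Hq; rewrite -Ej in Xp *.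
  have [_ H1] := Phi_hor Hh Xq Xp; lia.
- subst qj; have Xp := HM _ _ Hp; have Xq := HM _ _ Hq; rewrite -Ei in Xq *.
  have Hlt : pi.+1 < n by rewrite Ei.
  have := @Phi_down n h pi _ Hh Hn Hlt Xp Xq; lia.
- subst qj; have Xp := HM _ _ Hp; have Xq := HM _ _ Hq; rewrite -Ei in Xp *.
  have Hlt : qi.+1 < n by rewrite Ei.
  have := @Phi_up n h qi _ Hh Hn Hlt Xq Xp; lia.
Qed.

Lemma no_short1 n h (M : 'M[bool]_n) : 4 <= h -> 16 <= n ->
  (forall i j, M i j -> X n h i j) -> forall s, one_path M s -> 2 * n < size s.
Proof.
move=> Hh Hn HM [|c s] //= /and3P[/andP[Hp Ha] /eqP Hc /eqP Hl].
have := @lip_path n M true (fun p => (p.1 : nat) + Phi n h p.1 p.2) c s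
  (@Psi_lip n h M (ltac:(lia)) (ltac:(lia)) HM) Hp Ha.
rewrite Hc Hl /Phi /=.
have -> : barrier n n.-1 = false by rewrite /barrier; apply/negbTE; lia.
have -> : (n.-1 == 0) = false by apply/negbTE; lia.
rewrite /bb add0n.
have F1 := half_fact (n.-1 - 2); have F2 := half_fact (n.-1 - 1).
case: (odd n.-1) => /=.
- move=> H.
  have : 4 * (n.-1 - 2)./2 <= (n.-1 - 2)./2 * h by rewrite mulnC leq_mul2l Hh orbT.
  lia.
- move=> H.
  have : 4 * (n.-1 - 1)./2 <= (n.-1 - 1)./2 * h by rewrite mulnC leq_mul2l Hh orbT.
  lia.
Qed.

Lemma xmE n h (i j : 'I_n) : xm n h i j = X n h i j.
Proof. by rewrite /xm mxE. Qed.

Lemma no_zero n h s : 0 < h -> 6 * h <= n -> zero_path (xm n h) s -> False.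
Proof.
move=> Hh Hn; case: s => [|c s] //= /and3P[/andP[Hp Ha] /eqP Hc /eqP Hl].
move: (Ha) => /andP[/eqP Hc0 _].
rewrite xmE /X in Hc0; move/norP: Hc0 => [/negPn Hb Hnl].
have [l [Hlk _]] := leak_near (c := 0) Hh Hn Hb (leq_ltn_trans (leq0n _) (ltn_ord c.2)).
have Hlb : h <= l /\ l + h < n by move: Hlk => /and4P[_ _ -> ->].
pose I := fun p : cell n => ((p.1 : nat) == c.1) && (p.2 < l).
have Hf : forall p q : cell n, adj p q -> xm n h p.1 p.2 = false -> xm n h q.1 q.2 = false -> I p -> I q.
  move=> [pi pj] [qi qj] /=; rewrite /I /= !xmE /X.
  move=> Hadj /norP[/negPn Bp Lp] /norP[/negPn Bq Lq] /andP[/eqP Ep Hpl].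
  move: Hadj; rewrite /adj /=.
  case/orP => [/andP[/eqP Ei /orP[/eqP Ej|/eqP Ej]]|/andP[/eqP Ej /orP[/eqP Ei|/eqP Ei]]].
  - subst qi; rewrite Ep eqxx /=.
    have : (qj : nat) != l by apply/eqP => E; move: Lq; rewrite Ep E Hlk.
    lia.
  - subst qi; rewrite Ep eqxx /=. lia.
  - move: Bp Bq; rewrite /barrier -Ei /=; lia.
  - move: Bp Bq; rewrite /barrier -Ei /=; lia.
have := @inv_path n (xm n h) false I c s Hf Hp Ha.
rewrite /I Hl Hc eqxx /= => /(_ ltac:(lia)) /andP[_]. lia.
Qed.

Lemma psize_sum n (rho : 'M[option bool]_n) :
  psize rho = \sum_(i : 'I_n) \sum_(j : 'I_n) (rho i j != None).
Proof.
rewrite (pair_bigA _ (fun i j => (rho i j != None : nat))) /psize -sum1_card big_mkcond /=.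
by apply: eq_bigr => p _; rewrite inE; case: (_ != _).
Qed.

Lemma Ccert_ge n (f : 'M[bool]_n -> option bool) S x T : T <= n * n ->
  (forall rho, is_cert f S x rho -> T <= psize rho) -> T <= Ccert f S x.
Proof.
move=> Hn H; rewrite /Ccert; apply: (big_ind (fun v => T <= v)) => //.
- by move=> a b Ha Hb; rewrite leq_min Ha Hb.
- by move=> rho /asboolP /H.
Qed.

Definition x1c n (rho : 'M[option bool]_n) : 'M[bool]_n := \matrix_(i, j) (rho i j != Some false).
Definition x0c n (rho : 'M[option bool]_n) : 'M[bool]_n := \matrix_(i, j) (rho i j == Some true).

Lemma cons_x1 n (rho : 'M[option bool]_n) : consistent rho (x1c rho).
Proof. apply/forallP => i; apply/forallP => j; rewrite mxE; by case: (rho i j) => [[]|]. Qed.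
Lemma cons_x0 n (rho : 'M[option bool]_n) : consistent rho (x0c rho).
Proof. apply/forallP => i; apply/forallP => j; rewrite mxE; by case: (rho i j) => [[]|]. Qed.

Lemma cons_at n (rho : 'M[option bool]_n) x i j : consistent rho x ->
  rho i j = None \/ rho i j = Some (x i j).
Proof.
move=> /forallP /(_ i) /forallP /(_ j) /orP[/eqP|/eqP]; auto.
Qed.

Lemma Hex_true n (x : 'M[bool]_n) s : one_path x s -> size s <= 2 * n -> Hex x = Some true.
Proof. move=> H1 H2; rewrite /Hex; case: asboolP => // nH; exfalso; apply: nH; by exists s. Qed.

Lemma Hex_false n (x : 'M[bool]_n) s : ~ has_short_1path x -> zero_path x s -> size s <= 2 * n -> Hex x = Some false.
Proof.
move=> H0 H1 H2; rewrite /Hex; case: asboolP => // _.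
case: asboolP => // nH; exfalso; apply: nH; by exists s.
Qed.

Lemma Hex_xm n h : 4 <= h -> 6 * h <= n -> 16 <= n -> Hex (xm n h) = None.
Proof.
move=> Hh Hn Hn'; rewrite /Hex.
case: asboolP => [[s [Hs Hz]]|_].
  have HM : forall i j, xm n h i j -> X n h i j by move=> i j; rewrite xmE.
  have := @no_short1 n h (xm n h) Hh Hn' HM s Hs; lia.
case: asboolP => // [[s [Hs _]]].
by case: (no_zero (ltac:(lia) : 0 < h) Hn Hs).
Qed.

Lemma sum_le_succ (g : nat -> nat) m : \sum_(t < m) g t <= \sum_(t < m.+1) g t.
Proof. by rewrite big_ord_recr /= leq_addr. Qed.

Lemma sum_shift (g : nat -> nat) m : \sum_(t < m.+1) g t = g 0 + \sum_(t < m) g t.+1.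
Proof. by rewrite big_ord_recl. Qed.

Lemma cost_tri (q : nat -> nat) c m :
  \sum_(t < m) dist (q t) (q t.+1) <= 2 * \sum_(t < m.+1) dist (q t) c.
Proof.
apply: (@leq_trans (\sum_(t < m) (dist (q t) c + dist (q t.+1) c))).
  by apply: leq_sum => t _; rewrite /dist; lia.
rewrite big_split /= mul2n -addnn leq_add //; first exact: (sum_le_succ (fun t => dist (q t) c)).
by rewrite (sum_shift (fun t => dist (q t) c)) leq_addl.
Qed.

Lemma count_mod N a M u : 0 < M ->
  \sum_(j < N) ((j + a) %% M == u) <= (N + a) %/ M + 1.
Proof.
move=> HM.
rewrite addn1 -(card_ord ((N + a) %/ M).+1).
have -> : \sum_(j < N) ((j + a) %% M == u) = #|[set j : 'I_N | (j + a) %% M == u]|.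
  rewrite -sum1_card [in RHS]big_mkcond /=; apply: eq_bigr => j _; rewrite inE; by case: (_ == _).
pose f := fun j : 'I_N => (inord ((j + a) %/ M) : 'I_((N + a) %/ M).+1).
rewrite -(@card_in_imset _ _ f); first exact: max_card.
move=> j k; rewrite !inE => /eqP Hj /eqP Hk Hf.
have : (j + a) %/ M = (k + a) %/ M.
  move: (congr1 val Hf); rewrite /f /= !inordK //; rewrite ltnS; apply: leq_div2r; 
  rewrite leq_add2r; exact: ltnW.
move=> E; apply: val_inj => /=.
have := divn_eq (j + a) M; have := divn_eq (k + a) M.
rewrite Hj Hk E. lia.
Qed.

Lemma opt_le (a : option bool) : (a == Some false) <= (a != None).
Proof. by case: a => [[]|]. Qed.

Lemma bar1_bound m h (rho : 'M[option bool]_m.+1) : 4 <= h -> 6 * h <= m.+1 ->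
  is_cert (@Hex m.+1) bar1 (xm m.+1 h) rho -> m.+1 * (m.+1 %/ (20 * h)).+1 <= psize rho.
Proof.
move=> Hh Hn [Hcons Hcert].
rewrite leqNgt; apply/negP => Hlt.
set K := m.+1 %/ (20 * h) in Hlt.
have [c Hc] : exists c : 'I_m.+1, \sum_(i < m.+1) (rho i c == Some false) <= K.
  case: (boolP [exists c : 'I_m.+1, \sum_(i < m.+1) (rho i c == Some false) <= K]).
    by move=> /existsP[c Hc]; exists c.
  move=> /existsPn Hall; exfalso; move: Hlt; apply/negP; rewrite -leqNgt.
  rewrite psize_sum exchange_big /=.
  apply: (@leq_trans (\sum_(j < m.+1) \sum_(i < m.+1) (rho i j == Some false))); last first.
    by apply: leq_sum => j _; apply: leq_sum => i _; exact: opt_le.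
  apply: (@leq_trans (\sum_(j < m.+1) K.+1)).
    by rewrite sum_nat_const card_ord.
  by apply: leq_sum => j _; have := Hall j; rewrite -ltnNge.
have HL0 : forall ic : nat * nat, exists l, barrier m.+1 ic.1 -> ic.2 < m.+1 ->
    leak m.+1 h ic.1 l /\ dist ic.2 l <= 5 * h.
  move=> [i j]; case: (boolP (barrier m.+1 i)) => Hb; last by exists 0.
  case: (ltnP j m.+1) => Hj; last by exists 0 => _; lia.
  have [l Hl] := leak_near (ltac:(lia) : 0 < h) Hn Hb Hj; by exists l.
case: (choice HL0) => L HL.
pose fx i := barrier m.+1 i && (rho (inord i) c == Some false).
pose t i := if fx i then L (i, (c : nat)) else (c : nat).
pose q i := if barrier m.+1 i then t i else if barrier m.+1 i.-1 then t i.-1 else (c : nat).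
have Ht : forall i, (fx i -> leak m.+1 h i (t i) /\ dist c (t i) <= 5 * h) /\ (~~ fx i -> t i = c).
  move=> i; rewrite /t; case: ifP => Hf; split => // _.
  by apply: (HL (i, (c : nat))); [move: Hf => /andP[] | exact: ltn_ord].
have Htm : forall i, t i <= m.
  move=> i; case: (boolP (fx i)) => Hf.
  - by have [/(_ Hf) [/and4P[_ _ _ H] _] _] := Ht i; lia.
  - by have [_ /(_ Hf) ->] := Ht i; rewrite -ltnS.
have Hq : forall i, i <= m -> q i <= m.
  move=> i _; rewrite /q; case: ifP => _; first exact: Htm.
  case: ifP => _; first exact: Htm. by rewrite -ltnS.
have Hval : forall i j, i <= m -> j <= m -> (X m.+1 h i j || (rho (inord i) (inord j) != Some false)) ->
    x1c rho (inord i) (inord j).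
  move=> i j Hi Hj; rewrite mxE.
  case: (cons_at (inord i) (inord j) Hcons) => ->; rewrite ?orbT // xmE !inordK //.
  by case: (X _ _ _ _).
have HP : forall i j, i < m -> minn (q i) (q i.+1) <= j <= maxn (q i) (q i.+1) ->
    (fun p : cell m.+1 => x1c rho p.1 p.2) (cellN m i j).
  move=> i j Hi Hj; rewrite /cellN /=.
  have Hjm : j <= m by have := Hq i (ltnW Hi); have := Hq i.+1 Hi; lia.
  apply: Hval => //; first exact: ltnW.
  case Bi: (barrier m.+1 i); last by rewrite /X Bi.
  have Bi1 : barrier m.+1 i.+1 = false by move: Bi; rewrite /barrier /=; lia.
  have Eq : q i = t i /\ q i.+1 = t i by rewrite /q Bi Bi1 /=.
  have Ej : j = t i by move: Hj; rewrite (proj1 Eq) (proj2 Eq); lia.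
  case: (boolP (fx i)) => Hf.
  - have [/(_ Hf) [Hlk _] _] := Ht i; by rewrite /X Ej Hlk orbT.
  - have [_ /(_ Hf) Etc] := Ht i; rewrite Ej Etc inord_val.
    by move: Hf; rewrite /fx Bi /= => ->; rewrite orbT.
have Hlast : (fun p : cell m.+1 => x1c rho p.1 p.2) (cellN m m (q m)).
  rewrite /cellN /=; apply: Hval => //; first exact: Hq.
  by rewrite /X /barrier; apply/orP; left; lia.
have [c0 [s0 [G1 G2 G3 G4 G5]]] := GC Hq HP Hlast.
have Hone : one_path (x1c rho) (c0 :: s0).
  rewrite /one_path /Defs.bseq G1 G3 G4 /= !eqxx !andbT.
  move: G2; case: (c0) => a b /andP[H1 H2]; apply/andP; split; first by rewrite eqb_id.
  by apply: (sub_all _ H2) => [[a1 b1]] Hp; rewrite eqb_id.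
have Hcost : \sum_(t < m) dist (q t) (q t.+1) <= m.+1.
  apply: leq_trans (cost_tri q c m) _.
  have Hpt : forall i, dist (q i) c <= 5 * h * (fx i + fx i.-1).
    move=> i; rewrite /q; case: ifP => Bi.
    - case: (boolP (fx i)) => Hf.
      + have [/(_ Hf) [_ Hd] _] := Ht i; rewrite /dist in Hd *; lia.
      + have [_ /(_ Hf) ->] := Ht i; rewrite /dist; lia.
    - case: ifP => Bi1.
      + case: (boolP (fx i.-1)) => Hf.
        * have [/(_ Hf) [_ Hd] _] := Ht i.-1; rewrite /dist in Hd *; lia.
        * have [_ /(_ Hf) ->] := Ht i.-1; rewrite /dist; lia.
      + rewrite /dist; lia.
  apply: (@leq_trans (2 * (5 * h * \sum_(i < m.+1) (fx i + fx i.-1)))).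
    by rewrite leq_mul2l /= big_distrr /=; apply: leq_sum => i _; exact: Hpt.
  have Hs1 : \sum_(i < m.+1) fx i <= K.
    apply: leq_trans Hc; apply: leq_sum => i _.
    by rewrite /fx inord_val; case: (barrier _ _).
  have Hs2 : \sum_(i < m.+1) fx i.-1 <= \sum_(i < m.+1) fx i.
    rewrite (sum_shift (fun i => fx i.-1)) /=.
    rewrite add0n; exact: (sum_le_succ (fun i => (fx i : nat))).
  rewrite big_split /=.
  have HK : K * (20 * h) <= m.+1 by exact: leq_trunc_div.
  set A := \sum_(i < m.+1) fx i in Hs1 Hs2 *.
  set B := \sum_(i < m.+1) fx i.-1 in Hs2 *.
  have : h * (A + B) <= h * (2 * K) by rewrite leq_mul2l; apply/orP; right; lia.
  lia.
have Hsz : size (c0 :: s0) <= 2 * m.+1 by rewrite G5; lia.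
have := Hcert _ (cons_x1 rho); rewrite (Hex_true Hone Hsz) //.
Qed.

Lemma arith1 i (b : bool) : 3 <= i -> i - 2 - i + (i - (i - 2)) <= 2 * (b + true).
Proof. case: b => /=; lia. Qed.
Lemma arith2 i (b : bool) : 3 <= i -> i - (i - 2) + (i - 2 - i) <= 2 * (true + b).
Proof. case: b => /=; lia. Qed.

Lemma cost_num m h d S1 S2 : 4 <= h -> 6 * h <= m.+1 -> 16 <= m.+1 -> d < h ->
  S1 <= (m + d) %/ h.*2 + 1 -> S2 <= (m + (h.*2 - d)) %/ h.*2 + 1 -> 2 * (S1 + S2) <= m.+1.
Proof.
move=> Hh Hn Hn16 Hd C1 C2.
have T1 : (m + d) %/ h.*2 * h.*2 <= m + d by exact: leq_trunc_div.
have T2 : (m + (h.*2 - d)) %/ h.*2 * h.*2 <= m + (h.*2 - d) by exact: leq_trunc_div.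
move: C1 C2 T1 T2; move: ((m + d) %/ h.*2) ((m + (h.*2 - d)) %/ h.*2) => Q1 Q2 C1 C2 T1 T2.
have T3 : (Q1 + Q2) * 8 <= (Q1 + Q2) * h.*2 by rewrite leq_mul2l; apply/orP; right; lia.
lia.
Qed.

Lemma adj_swap n (p q : cell n) : adj p q -> adj (p.2, p.1) (q.2, q.1).
Proof. by rewrite /adj /= orbC. Qed.

Lemma zero_route m h (rho : 'M[option bool]_m.+1) i d : 4 <= h -> 6 * h <= m.+1 -> 16 <= m.+1 ->
  consistent rho (xm m.+1 h) -> barrier m.+1 i -> 3 <= i -> 0 < d < h ->
  (forall (y : 'I_m.+1) l, leak m.+1 h i l -> (y + d = l \/ (y : nat) = l + d) -> rho (inord i.-1) y = None) ->
  exists s, zero_path (x0c rho) s /\ size s <= 2 * m.+1.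
Proof.
move=> Hh Hn Hn16 Hcons Bi Hi3 Hd Hkill.
set n := m.+1.
pose inI j := [exists l : 'I_n, leak n h i l && (l - d < j <= l + d)].
pose q j := if inI j then i - 2 else i.
have Him : i <= m by move: Bi; rewrite /barrier; lia.
have Bi2 : barrier n (i - 2) by move: Bi; rewrite /barrier; lia.
have Eoff : off h (i - 2).+2 = off h i by rewrite (_ : (i - 2).+2 = i) //; lia.
have Hq : forall j, j <= m -> q j <= m by move=> j _; rewrite /q; case: ifP; lia.
have Hval0 : forall r c, r <= m -> c <= m ->
    (~~ X n h r c || (rho (inord r) (inord c) == None)) -> ~~ x0c rho (inord r) (inord c).
  move=> r c Hr Hc; rewrite mxE.
  case: (cons_at (inord r) (inord c) Hcons) => ->; rewrite ?orbT // xmE !inordK //.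
  by case: (X _ _ _ _).
have leakI : forall j, leak n h i j -> inI j.
  move=> j Hl; apply/existsP; have Hj : j < n by move: Hl => /and4P[_ _ _]; lia.
  have Hj2 : h <= j by move: Hl => /and4P[_ _ ->].
  exists (Ordinal Hj); rewrite /= Hl /=; apply/andP; split; lia.
have nleak2 : forall j l, leak n h i l -> dist j l < h -> ~~ leak n h (i - 2) j.
  move=> j l Hl Hjl; apply/negP => Hj2.
  have := @res_far h j l (off h (i - 2)) (off h i) (ltac:(lia)) (leak_res Hj2) (leak_res Hl)
    (off_cases _ _) (off_cases _ _).
  rewrite -Eoff; move/(_ (fun E => off_diff (ltac:(lia) : 0 < h) (ltac:(move: Bi2; rewrite /barrier; lia) : odd (i - 2)) (esym E))).
  lia.
have nleakd : forall j l, leak n h i l -> 0 < dist j l < h.*2 -> ~~ leak n h i j.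
  move=> j l Hl Hjl; apply/negP => Hj.
  have Hr : j %% h.*2 = l %% h.*2 by rewrite (leak_res Hj) (leak_res Hl).
  case: (ltngtP j l) => Hjl2.
  - have := @res_same h.*2 j l (ltac:(rewrite double_gt0; lia)) Hr Hjl2; rewrite /dist in Hjl; lia.
  - have := @res_same h.*2 l j (ltac:(rewrite double_gt0; lia)) (esym Hr) Hjl2; rewrite /dist in Hjl; lia.
  - rewrite /dist in Hjl; lia.
have zb : forall r c, r <= m -> c <= m -> barrier n r -> ~~ leak n h r c -> ~~ X n h r c.
  by move=> r c _ _ Br Lr; rewrite /X Br Lr.
have inE1 : forall j, inI j -> exists l, [/\ leak n h i l, h <= l, l - d < j & j <= l + d].
  move=> j /existsP[l /andP[Hl Hb]]; exists l; split => //; [by move: Hl => /and4P[] | lia | lia].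
have inE0 : forall j l, ~~ inI j -> leak n h i l -> l < n -> ~~ (l - d < j <= l + d).
  move=> j l /existsPn Hn0 Hl Hln; have := Hn0 (Ordinal Hln); by rewrite /= Hl.
have HP : forall j k, j < m -> minn (q j) (q j.+1) <= k <= maxn (q j) (q j.+1) ->
    (fun p : cell n => ~~ x0c rho p.2 p.1) (cellN m j k).
  move=> j k Hj Hk; rewrite /cellN /=.
  have Hkm : k <= m by have := Hq j (ltnW Hj); have := Hq j.+1 Hj; lia.
  apply: Hval0 => //; first exact: ltnW.
  move: Hk; rewrite /q; case Ij: (inI j); case Ij1: (inI j.+1) => Hk.
  - have Ek : k = i - 2 by lia.
    have [l [Hl Hhl H1 H2]] := inE1 j Ij.
    rewrite Ek; apply/orP; left; apply: zb => //; [lia | lia | apply: (nleak2 j l Hl); rewrite /dist; lia].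
  -
    have [l [Hl Hhl H1 H2]] := inE1 j Ij.
    have Hln : l < n by move: Hl => /and4P[_ _ _]; lia.
    have := inE0 j.+1 l (negbT Ij1) Hl Hln => Hno.
    have Ejl : j = l + d by lia.
    have : k = i - 2 \/ k = i - 1 \/ k = i by lia.
    case=> [->|[->|->]].
    + apply/orP; left; apply: zb => //; [lia | lia | apply: (nleak2 j l Hl); rewrite /dist; lia].
    + apply/orP; right; apply/eqP.
      have -> : (inord j : 'I_n) = Ordinal (ltac:(lia) : j < n) by apply: val_inj; rewrite /= inordK //; lia.
      rewrite (_ : i - 1 = i.-1); last lia.
      apply: (Hkill _ l Hl); right; rewrite /= Ejl //.
    + apply/orP; left; apply: zb => //; [lia | apply: (nleakd j l Hl); rewrite /dist; lia].
  -
    have [l [Hl Hhl H1 H2]] := inE1 j.+1 Ij1.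
    have Hln : l < n by move: Hl => /and4P[_ _ _]; lia.
    have := inE0 j l (negbT Ij) Hl Hln => Hno.
    have Ejl : j + d = l by lia.
    have : k = i - 2 \/ k = i - 1 \/ k = i by lia.
    case=> [->|[->|->]].
    + apply/orP; left; apply: zb => //; [lia | lia | apply: (nleak2 j l Hl); rewrite /dist; lia].
    + apply/orP; right; apply/eqP.
      have -> : (inord j : 'I_n) = Ordinal (ltac:(lia) : j < n) by apply: val_inj; rewrite /= inordK //; lia.
      rewrite (_ : i - 1 = i.-1); last lia.
      apply: (Hkill _ l Hl); left; rewrite /= Ejl //.
    + apply/orP; left; apply: zb => //; [lia | apply: (nleakd j l Hl); rewrite /dist; lia].
  - have Ek : k = i by lia.
    rewrite Ek; apply/orP; left; apply: zb => //; first lia.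
    apply/negP => Hl; move: Ij; rewrite (leakI j Hl) //.
have Iml : ~~ inI m.
  apply/negP => /inE1 [l [Hl _ _ H2]]; move: Hl => /and4P[_ _ _]; lia.
have Hlast : (fun p : cell n => ~~ x0c rho p.2 p.1) (cellN m m (q m)).
  rewrite /cellN /= /q (negbTE Iml); apply: Hval0 => //.
  apply/orP; left; apply: zb => //; rewrite /leak; apply/negP => /and4P[_ _ _]; lia.
have [c0 [s0 [G1 G2 G3 G4 G5]]] := @GC m (fun p : cell n => ~~ x0c rho p.2 p.1) q Hq HP Hlast.
have Hcost : \sum_(t < m) dist (q t) (q t.+1) <= m.+1.
  set u := off h i.
  have Hpt : forall j, dist (q j) (q j.+1) <=
      2 * (((j + d) %% h.*2 == u) + ((j + (h.*2 - d)) %% h.*2 == u)).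
    move=> j; rewrite /q; case Ij: (inI j); case Ij1: (inI j.+1); rewrite /dist ?subnn //.
    - have [l [Hl Hhl H1 H2]] := inE1 j Ij.
      have Hln : l < n by move: Hl => /and4P[_ _ _]; lia.
      have := inE0 j.+1 l (negbT Ij1) Hl Hln => Hno.
      have Ejl : j + (h.*2 - d) = l + h.*2 by lia.
      by rewrite Ejl modnDr (leak_res Hl) eqxx; apply: arith1.
    - have [l [Hl Hhl H1 H2]] := inE1 j.+1 Ij1.
      have Hln : l < n by move: Hl => /and4P[_ _ _]; lia.
      have := inE0 j l (negbT Ij) Hl Hln => Hno.
      have Ejl : j + d = l by lia.
      by rewrite Ejl (leak_res Hl) eqxx; apply: arith2.
  apply: (@leq_trans (2 * (\sum_(j < m) ((j + d) %% h.*2 == u) + \sum_(j < m) ((j + (h.*2 - d)) %% h.*2 == u)))).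
    by rewrite -big_split big_distrr /=; apply: leq_sum => j _; exact: Hpt.
  have Hh2 : 0 < h.*2 by rewrite double_gt0; lia.
  have C1 := count_mod m d u Hh2; have C2 := count_mod m (h.*2 - d) u Hh2.
  exact: (cost_num Hh Hn Hn16 (proj2 (andP Hd)) C1 C2).
exists [seq (p.2, p.1) | p <- c0 :: s0]; split; last by rewrite size_map G5; lia.
rewrite /zero_path /= /Defs.bseq.
apply/and3P; split.
- apply/andP; split.
  + exact: (homo_path (@adj_swap n) G1).
  + move: G2 => /=; case: (c0) => a b /= /andP[H1 H2]; apply/andP; split; first by rewrite eqbF_neg.
    rewrite all_map; apply: (sub_all _ H2) => [[a1 b1]] Hp /=; by rewrite eqbF_neg.
- by rewrite G3.
- by rewrite last_map G4.
Qed.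


Lemma arith3 y l l' e e' h : e < h.-1 -> e' < h.-1 ->
  (y + e.+1 = l \/ y = l + e.+1) -> (y + e'.+1 = l' \/ y = l' + e'.+1) -> dist l l' < h.*2.
Proof. rewrite /dist; lia. Qed.
Lemma arith4 y l e e' : (y + e.+1 = l \/ y = l + e.+1) -> (y + e'.+1 = l \/ y = l + e'.+1) -> e = e'.
Proof. lia. Qed.

Lemma same_leak n h i l l' : 0 < h -> leak n h i l -> leak n h i l' -> dist l l' < h.*2 -> l = l'.
Proof.
move=> Hh Hl Hl' Hd.
have Hr : l %% h.*2 = l' %% h.*2 by rewrite (leak_res Hl) (leak_res Hl').
have H2 : 0 < h.*2 by rewrite double_gt0.
case: (ltngtP l l') => H //.
- have := res_same H2 Hr H; clear Hr Hl Hl'; rewrite /dist in Hd; lia.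
- have := res_same H2 (esym Hr) H; clear Hr Hl Hl'; rewrite /dist in Hd; lia.
Qed.

Lemma bar0_bound m h (rho : 'M[option bool]_m.+1) : 4 <= h -> 6 * h <= m.+1 -> 16 <= m.+1 ->
  is_cert (@Hex m.+1) bar0 (xm m.+1 h) rho -> (m.+1./2 - 3) * h.-1 <= psize rho.
Proof.
move=> Hh Hn Hn16 [Hcons Hcert].
set n := m.+1.
have HM0 : forall i j, x0c rho i j -> X n h i j.
  move=> i j; rewrite mxE; case: (cons_at i j Hcons) => -> //=.
  by rewrite xmE => /eqP [->].
have nos1 : ~ has_short_1path (x0c rho).
  move=> [s [Hs Hsz]]; have := no_short1 Hh Hn16 HM0 Hs; lia.
have Hhalf := half_fact n.
have Kill : forall p : 'I_(n./2 - 3) * 'I_h.-1, exists y : 'I_n,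
    (rho (inord (2 * p.1 + 2)) y != None) &&
    [exists l : 'I_n, leak n h (2 * p.1 + 3) l && ((y + p.2.+1 == l) || ((y : nat) == l + p.2.+1))].
  move=> [k e] /=.
  case: (boolP [exists y : 'I_n, (rho (inord (2 * k + 2)) y != None) &&
    [exists l : 'I_n, leak n h (2 * k + 3) l && ((y + e.+1 == l) || ((y : nat) == l + e.+1))]]).
    by move=> /existsP.
  move=> /existsPn Hno; exfalso.
  have Hk := ltn_ord k; have He := ltn_ord e.
  have Bi : barrier n (2 * k + 3) by rewrite /barrier; apply/andP; split; lia.
  have Hkill : forall (y : 'I_n) l, leak n h (2 * k + 3) l -> (y + e.+1 = l \/ (y : nat) = l + e.+1) ->
      rho (inord (2 * k + 3).-1) y = None.
    move=> y l Hl Hyl; have Hln : l < n by move: Hl => /and4P[_ _ _]; lia.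
    have := Hno y; rewrite negb_and negbK => /orP[|/existsPn /(_ (Ordinal Hln))].
    + by rewrite (_ : (2 * k + 3).-1 = 2 * k + 2) //; [move/eqP | lia].
    + rewrite /= Hl /=; case: Hyl => ->; rewrite eqxx ?orbT //.
  have [s [Hs Hsz]] := @zero_route m h rho (2 * k + 3) e.+1 Hh Hn Hn16 Hcons Bi
    (ltac:(lia)) (ltac:(apply/andP; split; lia)) Hkill.
  by have := Hcert _ (cons_x0 rho); rewrite (Hex_false nos1 Hs Hsz).
case: (choice Kill) => kap Hkap.
pose f (p : 'I_(n./2 - 3) * 'I_h.-1) : cell n := (inord (2 * p.1 + 2), kap p).
have finj : injective f.
  move=> [k e] [k' e'] [E1 E2].
  have Hk := ltn_ord k; have Hk' := ltn_ord k'.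
  have Ek : k = k'.
    have Hb : forall kk : nat, kk < n./2 - 3 -> 2 * kk + 2 < m.+1.
      move=> kk; move: Hhalf; rewrite /n -muln2; clear; lia.
    apply: val_inj; move: (congr1 val E1); rewrite /= !inordK; [lia | exact: Hb | exact: Hb].
  subst k'.
  have /andP[_ /existsP[l /andP[Hl Hyl]]] := Hkap (k, e).
  have /andP[_ /existsP[l' /andP[Hl' Hyl']]] := Hkap (k, e').
  move: Hyl Hyl'; rewrite /= -E2 => Hyl Hyl'.
  have He := ltn_ord e; have He' := ltn_ord e'.
  have Ell : (l : nat) = l'.
    apply: (same_leak (ltac:(lia) : 0 < h) Hl Hl').
    apply: (arith3 He He' (y := kap (k, e))).
    + by case/orP: Hyl => /eqP; auto.
    + by case/orP: Hyl' => /eqP; auto.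
  have : (e : nat) = e'.
    apply: (arith4 (y := kap (k, e)) (l := l')).
    + by rewrite -Ell; case/orP: Hyl => /eqP; auto.
    + by case/orP: Hyl' => /eqP; auto.
  by move=> Ee; congr (_, _); apply: val_inj.
have -> : (n./2 - 3) * h.-1 = #|[set f p | p : 'I_(n./2 - 3) * 'I_h.-1]|.
  by rewrite card_imset // card_prod !card_ord.
rewrite /psize; apply: subset_leq_card; apply/subsetP => c /imsetP[p _ ->].
rewrite inE /=; by have /andP[] := Hkap p.
Qed.

Unset Implicit Arguments.
Import Order.TTheory GRing.Theory Num.Theory.
Local Open Scope ring_scope.

Lemma real_part (R : realType) (n h : nat) : (n <= h.+1 * h.+1)%N ->
  (n%:R : R) `^ (3 / 2) <= (n * h.+1)%:R.
Proof.
move=> Hn.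
have -> : (3 / 2 : R) = 1 + 2^-1 by field.
rewrite powRD; last by apply/implyP => /eqP H; exfalso; lra.
rewrite powRr1 ?ler0n // powR12_sqrt ?ler0n // natrM ler_wpM2l ?ler0n //.
have -> : (h.+1%:R : R) = Num.sqrt ((h.+1 * h.+1)%:R).
  by rewrite natrM -expr2 sqrtr_sqr ger0_norm ?ler0n.
by rewrite ler_wsqrtr // ler_nat.
Qed.

Lemma final_step (R : realType) (n h T C : nat) : (n <= h.+1 * h.+1)%N ->
  (n * h.+1 <= 40 * T)%N -> (T <= C)%N ->
  (40%:R^-1 : R) * ((n%:R : R) `^ (3 / 2)) <= C%:R.
Proof.
move=> H1 H2 H3.
have Hp := @real_part R n h H1.
have H2' : ((n * h.+1)%:R : R) <= 40%:R * T%:R by rewrite -natrM ler_nat.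
have H3' : (T%:R : R) <= C%:R by rewrite ler_nat.
have H0 : 0 <= (n%:R : R) `^ (3 / 2) by exact: powR_ge0.
have E : (40%:R^-1 : R) * 40%:R = 1 by rewrite mulVf // pnatr_eq0.
set P := (n%:R : R) `^ (3 / 2) in Hp H0 *.
set A := ((n * h.+1)%:R : R) in Hp H2'.
have H4 : (40%:R^-1 : R) * P <= 40%:R^-1 * (40%:R * T%:R).
  apply: ler_wpM2l; first by rewrite invr_ge0 ler0n.
  exact: le_trans Hp H2'.
rewrite mulrA E mul1r in H4.
exact: le_trans H4 H3'.
Qed.

Lemma nat_bounds n : (400 <= n)%N ->
  let h := Nat.sqrt n in [/\ (20 <= h)%N, (6 * h <= n)%N, (n <= h.+1 * h.+1)%N & (h * h <= n)%N].
Proof.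
move=> Hn h.
have [H1 H2] := Nat.sqrt_spec n (Nat.le_0_l n).
rewrite -/h in H1 H2.
have A : (h * h <= n)%N by apply/ssrnat.leP.
have B : (n < h.+1 * h.+1)%N by apply/ssrnat.ltP.
have C : (20 <= h)%N.
  rewrite leqNgt; apply/negP => Hh.
  have : (h.+1 * h.+1 <= 20 * 20)%N by apply: leq_mul.
  lia.
split => //; [nia | exact: ltnW].
Qed.

Theorem lemma4p1 (R : realType) :
  exists c : R, 0 < c /\
  exists N : nat, forall n : nat, (N <= n)%N ->
    exists x : 'M[bool]_n,
      Hex x = None /\
      c * ((n%:R : R) `^ (3 / 2)) <= (Ccert (@Hex n) bar0 x)%:R /\
      c * ((n%:R : R) `^ (3 / 2)) <= (Ccert (@Hex n) bar1 x)%:R.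
Proof.
exists (40%:R^-1); split; first by rewrite invr_gt0 ltr0n.
exists 400%N => n Hn.
case: n Hn => [|m] Hn //.
have [Hh Hhn Hsq Hhh] := nat_bounds m.+1 Hn.
move: (Nat.sqrt m.+1) Hh Hhn Hsq Hhh => h Hh Hhn Hsq Hhh.
exists (xm m.+1 h); split; first by apply: Hex_xm => //; lia.
split.
- apply: (@final_step R m.+1 h ((m.+1./2 - 3) * h.-1)%N) => //.
  + have F := half_fact m.+1; rewrite -muln2 in F.
    move: F; move: (m.+1./2) => X F.
    have A : (m.+1 <= 4 * (X - 3))%N by lia.
    have B : (h.+1 <= 2 * h.-1)%N by lia.
    have := leq_mul A B. clear -F A B Hh Hn. nia.
  + apply: Ccert_ge.
    * have F := half_fact m.+1; rewrite -muln2 in F.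
      move: F; move: (m.+1./2) => X F.
      apply: leq_mul; lia.
    * move=> rho Hc; apply: bar0_bound => //; lia.
- apply: (@final_step R m.+1 h (m.+1 * (m.+1 %/ (20 * h)).+1)%N) => //.
  + have Hd : (0 < 20 * h)%N by lia.
    have C := @div.ltn_ceil m.+1 (20 * h) Hd.
    have T := @leq_trunc_div m.+1 (20 * h).
    move: C T; move: (m.+1 %/ (20 * h))%N => K C T.
    have D : (h * h < K.+1 * 20 * h)%N by rewrite -mulnA; lia.
    have E : (h < K.+1 * 20)%N by rewrite -(ltn_pmul2r (_ : (0 < h)%N)) //; lia.
    have := leq_mul (leqnn m.+1) (E : (h.+1 <= K.+1 * 20)%N). clear -Hh. nia.
  + apply: Ccert_ge.
    * have Hd : (0 < 20 * h)%N by lia.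
      have T := @leq_trunc_div m.+1 (20 * h).
      move: T; move: (m.+1 %/ (20 * h))%N => K T.
      apply: leq_mul => //. 
      have : (K * 2 <= K * (20 * h))%N by rewrite leq_mul2l; apply/orP; right; lia.
      lia.
    * move=> rho Hc; apply: bar1_bound => //; lia.
Qed.
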